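(* Let $K$ be a complex with the maximum number of facets among all complexes in $\mathcal{K}(n,r,\beta)$. Then $K$ contains every $r$-element subset of $V(K)$ as an $(r-1)$-face, and $K$ is $(r-1)$-path connected.
   Context: A (finite abstract) simplicial complex $K$ on a finite vertex set $V(K)$ is a family of subsets of $V(K)$ closed under taking subsets and containing every singleton; it is on $n$ vertices if $|V(K)|=n$. An $i$-face is a member of cardinality $i+1$; facets are inclusion-maximal faces; $K$ is pure if all facets have the same dimension. Two distinct $i$-faces are up-neighbors if their union is an $(i+1)$-face. $K$ is $i$-path connected if for any two $i$-faces $F,G$ there is a sequence $F=F_1,\dots,F_m=G$ of $i$-faces in which consecutive terms are up-neighbors. $\beta_r(K)=\dim_{\mathbb R}H_r(K;\mathbb R)$. $\mathcal{K}(n,r,\beta)$ denotes the set of pure $r$-dimensional simplicial complexes on $n$ vertices with $\beta_r=\beta$ ($r\ge 1$). *)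

(* Defs.v *)
From HB Require Import structures.
From mathcomp Require Import all_boot all_order all_algebra.
From Stdlib Require Import Reals.
From mathcomp Require Import Rstruct.
Set Implicit Arguments. Unset Strict Implicit. Unset Printing Implicit Defensive.
Import GRing.Theory.

Definition simplicial_complex (n : nat) (K : {set {set 'I_n}}) : Prop :=
  (forall F G : {set 'I_n}, F \in K -> G \subset F -> G \in K) /\
  (forall v : 'I_n, [set v] \in K).

Definition facets (n : nat) (K : {set {set 'I_n}}) : {set {set 'I_n}} :=
  [set F in K | [forall G in K, (F \subset G) ==> (G == F)]].

Definition has_dim (n : nat) (K : {set {set 'I_n}}) (r : nat) : Prop :=
  (exists2 F, F \in K & #|F| = r.+1) /\ (forall F, F \in K -> (#|F| <= r.+1)%N = true).

Definition pure_of_dim (n : nat) (K : {set {set 'I_n}}) (r : nat) : Prop :=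
  has_dim K r /\ (forall F, F \in facets K -> #|F| = r.+1).

(* faces with exactly k elements, i.e. (k-1)-faces *)
Definition faces_card (n : nat) (K : {set {set 'I_n}}) (k : nat) : {set {set 'I_n}} :=
  [set F in K | #|F| == k].

(* Coefficient of G in the simplicial boundary of F, vertices ordered by 'I_n:
   if F = G + {v}, it is (-1)^(number of vertices of F smaller than v). *)
Local Open Scope ring_scope.
Definition bcoef (n : nat) (F G : {set 'I_n}) : R :=
  if (G \subset F) && (#|F :\: G| == 1%N) then
    match [pick v in F :\: G] with
    | Some v => (-1) ^+ #|[set u in F | ltn (nat_of_ord u) (nat_of_ord v)]|
    | None => 0
    end
  else 0.

(* Matrix of the boundary map d_k : C_k(K;R) -> C_{k-1}(K;R)
   (rows: k-faces, columns: (k-1)-faces; row-vector convention u *m A). *)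
Definition bdry (n : nat) (K : {set {set 'I_n}}) (k : nat)
  : 'M[R]_(#|faces_card K k.+1|, #|faces_card K k|) :=
  \matrix_(i < #|faces_card K k.+1|, j < #|faces_card K k|)
     bcoef (enum_val i) (enum_val j).

Local Close Scope ring_scope.
(* beta_r(K) = dim H_r(K;R) = dim ker d_r - rank d_{r+1} *)
Definition betti (n : nat) (K : {set {set 'I_n}}) (r : nat) : nat :=
  (#|faces_card K r.+1| - \rank (bdry K r) - \rank (bdry K r.+1))%N.

Definition Kclass (n r beta : nat) (K : {set {set 'I_n}}) : Prop :=
  simplicial_complex K /\ pure_of_dim K r /\ betti K r = beta.

Definition up_neighbors (n : nat) (K : {set {set 'I_n}}) (i : nat) (F G : {set 'I_n}) : bool :=
  [&& F \in K, G \in K, #|F| == i.+1, #|G| == i.+1, F != G,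
      F :|: G \in K & #|F :|: G| == i.+2].

Definition path_connected (n : nat) (K : {set {set 'I_n}}) (i : nat) : Prop :=
  forall F G, F \in K -> G \in K -> #|F| = i.+1 -> #|G| = i.+1 ->
    exists s : seq {set 'I_n}, path (up_neighbors K i) F s /\ last F s = G.

(* Main.v *)
Require Import Defs.
From HB Require Import structures.
From mathcomp Require Import all_boot all_order all_algebra.
From Stdlib Require Import Reals.
From mathcomp Require Import Rstruct.
From mathcomp Require Import ring zify.
Set Implicit Arguments. Unset Strict Implicit. Unset Printing Implicit Defensive.
Import GRing.Theory.
Local Open Scope ring_scope.

Definition cnt (n : nat) (F : {set 'I_n}) (v : 'I_n) : nat :=
  #|[set u in F | ltn (nat_of_ord u) (nat_of_ord v)]|.

Lemma bcoef_supp (n : nat) (F G : {set 'I_n}) :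
  bcoef F G != 0 -> (G \subset F) /\ #|F :\: G| = 1%N.
Proof.
rewrite /bcoef; case: andP => [[h1 /eqP h2] _|]; first by [].
by rewrite eqxx.
Qed.

Lemma bcoef_one (n : nat) (F G : {set 'I_n}) v :
  G \subset F -> F :\: G = [set v] -> bcoef F G = (-1) ^+ cnt F v.
Proof.
move=> sGF e; rewrite /bcoef sGF e cards1 eqxx /=.
case: pickP => [x|/(_ v)]; last by rewrite in_set1 eqxx.
by rewrite in_set1 => /eqP ->.
Qed.

Lemma bcoef_nz (n : nat) (F G : {set 'I_n}) :
  G \subset F -> #|F :\: G| = 1%N -> bcoef F G != 0.
Proof.
move=> sGF /eqP/cards1P [v e]; rewrite (bcoef_one sGF e).
by rewrite expf_neq0 // oppr_eq0 oner_eq0.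
Qed.

Lemma cnt_del (n : nat) (t : {set 'I_n}) a b : a \in t -> a != b ->
  cnt t b = addn (cnt (t :\ a) b) (ltn a b).
Proof.
move=> ain ab; rewrite /cnt.
case: (ltnP a b) => hab.
  have -> : [set u in t | ltn u b] = a |: [set u in t :\ a | ltn u b].
    apply/setP => x; rewrite !inE; case: (eqVneq x a) => [->|]//=.
    by rewrite ain hab.
  by rewrite cardsU1 !inE eqxx /= hab addnC.
rewrite /ltn /= ltnNge hab addn0; apply: eq_card => x; rewrite !inE.
case: (eqVneq x a) => [->|]//=; rewrite ain /=; apply/negbTE; rewrite -leqNgt //.
Qed.

Lemma sign_cancel (n : nat) (t D : {set 'I_n}) a b :
  D \subset t -> t :\: D = [set a; b] -> a != b ->
  bcoef t (t :\ a) * bcoef (t :\ a) D + bcoef t (t :\ b) * bcoef (t :\ b) D = 0.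
Proof.
wlog lab : a b / ltn a b.
  move=> W sDt e ab; case: (ltngtP a b) => h.
  - exact: W.
  - rewrite addrC; apply: W; rewrite // 1?eq_sym // e.
    by apply/setP => x; rewrite !inE orbC.
  - by move: ab; rewrite -(inj_eq val_inj) /= h eqxx.
move=> sDt e ab.
have aD : a \in t :\: D by rewrite e !inE eqxx.
have bD : b \in t :\: D by rewrite e !inE eqxx orbT.
have ain : a \in t by case/setDP: aD.
have bin : b \in t by case/setDP: bD.
have aND : a \notin D by case/setDP: aD.
have bND : b \notin D by case/setDP: bD.
have ex1 c : c \in t -> t :\: (t :\ c) = [set c].
  move=> ct; apply/setP => x; rewrite !inE; case: (eqVneq x c) => [->|] //=.
  by case: (x \in t).
have ex2 c d : (forall x, x \in t :\: D -> x != c -> x = d) -> d \in t :\: D -> c != d -> (t :\ c) :\: D = [set d].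
  move=> H dD cd; apply/setP => x; rewrite !inE.
  case: (eqVneq x d) => [->|xd]; first by case/setDP: dD => -> ->; rewrite eq_sym cd.
  apply/negbTE/negP => /and3P [xND xc xt].
  by move: xd; rewrite (H x) ?eqxx // inE xND xt.
have Hab : forall y, y \in t :\: D -> y != a -> y = b.
  by move=> y; rewrite e !inE => /orP [->|/eqP] //.
have Hba : forall y, y \in t :\: D -> y != b -> y = a.
  by move=> y; rewrite e !inE => /orP [/eqP|/eqP ->] //; rewrite eqxx.
have sD c : c \notin D -> D \subset t :\ c.
  move=> cN; apply/subsetP => x xD; rewrite !inE (subsetP sDt) // andbT.
  by apply: contraNneq cN => <-.
rewrite (bcoef_one _ (ex1 _ ain)) ?subsetDl //.
rewrite (bcoef_one _ (ex1 _ bin)) ?subsetDl //.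
rewrite (bcoef_one (sD _ aND) (ex2 _ _ Hab bD ab)).
rewrite (bcoef_one (sD _ bND) (ex2 _ _ Hba aD _)); last by rewrite eq_sym.
rewrite (cnt_del bin (_ : b != a)) ?(eq_sym b) //.
rewrite (cnt_del ain (_ : a != b)) //.
have -> : ltn b a = false by rewrite /ltn /= ltnNge ltnW.
rewrite lab addn0 addn1 exprS; ring.
Qed.

Lemma nz_form (n : nat) (t X D : {set 'I_n}) :
  bcoef t X != 0 -> bcoef X D != 0 -> exists c, c \in t :\: D /\ X = t :\ c.
Proof.
move=> /bcoef_supp [sXt /eqP/cards1P [c ec]] /bcoef_supp [sDX _].
have ct : c \in t :\: X by rewrite ec set11.
have cnX : c \notin X by case/setDP: ct.
exists c; split.
  rewrite inE (setDP ct).1 andbT; apply: contra cnX; exact: (subsetP sDX).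
apply/setP => x; rewrite !inE; case: (eqVneq x c) => [->|xc] /=.
  exact/negbTE.
case xt: (x \in t); last by apply/negbTE; apply: contraFN xt; apply: (subsetP sXt).
apply/negPn/negP => xX; have : x \in t :\: X by rewrite inE xX xt.
by rewrite ec inE (negbTE xc).
Qed.

Lemma sum_notsub (n : nat) (t D : {set 'I_n}) (g : {set 'I_n} -> R) :
  ~~ (D \subset t) -> \sum_(X : {set 'I_n}) bcoef t X * (g X * bcoef X D) = 0.
Proof.
move=> nsub; apply: big1 => X _.
case: (eqVneq (bcoef t X) 0) => [->|h1]; first by rewrite mul0r.
case: (eqVneq (bcoef X D) 0) => [->|h2]; first by rewrite !mulr0.
have [/bcoef_supp [s1 _] /bcoef_supp [s2 _]] := conj h1 h2.
by move: nsub; rewrite (subset_trans s2 s1).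
Qed.

Lemma sum2 (n : nat) (t D : {set 'I_n}) a b (g : {set 'I_n} -> R) :
  D \subset t -> t :\: D = [set a; b] -> a != b ->
  \sum_(X : {set 'I_n}) bcoef t X * (g X * bcoef X D) =
  bcoef t (t :\ a) * (g (t :\ a) * bcoef (t :\ a) D) +
  bcoef t (t :\ b) * (g (t :\ b) * bcoef (t :\ b) D).
Proof.
move=> sDt e ab.
have bin : b \in t :\ a.
  have : b \in t :\: D by rewrite e !inE eqxx orbT.
  by case/setDP => bt _; rewrite !inE eq_sym ab bt.
have neq : t :\ a != t :\ b by apply/negP => /eqP E; move: bin; rewrite E !inE eqxx.
rewrite (bigD1 (t :\ a)) //= (bigD1 (t :\ b)) /=; last by rewrite eq_sym.
rewrite [X in _ + (_ + X)]big1 ?addr0 //.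
move=> X /andP [X1 X2].
case: (eqVneq (bcoef t X) 0) => [->|h1]; first by rewrite mul0r.
case: (eqVneq (bcoef X D) 0) => [->|h2]; first by rewrite !mulr0.
have [c [cD eX]] := nz_form h1 h2.
move: cD; rewrite e !inE => /orP [] /eqP ec.
  by move: X1; rewrite eX ec eqxx.
by move: X2; rewrite eX ec eqxx.
Qed.

Definition NN (n : nat) := #|{: {set 'I_n}}|.

Definition rowv (n : nat) (rho : {set 'I_n}) : 'rV[R]_(NN n) :=
  \row_(k < NN n) bcoef rho (enum_val k).

Definition colv (n : nat) (phi : {set 'I_n} -> R) : 'cV[R]_(NN n) :=
  \col_(k < NN n) phi (enum_val k).

Lemma rowv_colv (n : nat) rho (phi : {set 'I_n} -> R) :
  (rowv rho *m colv phi) 0 0 = \sum_(X : {set 'I_n}) bcoef rho X * phi X.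
Proof.
rewrite mxE; rewrite (big_enum_val (A := {: {set 'I_n}})) /=.
by apply: eq_bigr => k _; rewrite !mxE.
Qed.

Definition Bm (n : nat) (K : {set {set 'I_n}}) (r : nat)
  : 'M[R]_(#|faces_card K r.+1|, NN n) :=
  \matrix_(i < #|faces_card K r.+1|, k < NN n) bcoef (enum_val i) (enum_val k).

Definition Csel (n : nat) (K : {set {set 'I_n}}) (r : nat)
  : 'M[R]_(#|faces_card K r|, NN n) :=
  \matrix_(j < #|faces_card K r|, k < NN n) ((enum_val j == enum_val k)%:R).

Lemma row_Bm (n : nat) (K : {set {set 'I_n}}) r i :
  row i (Bm K r) = rowv (enum_val i).
Proof. by apply/rowP => k; rewrite !mxE. Qed.

Definition closedK (n : nat) (K : {set {set 'I_n}}) :=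
  forall F G : {set 'I_n}, F \in K -> G \subset F -> G \in K.

Local Close Scope ring_scope.
Lemma bcoef_face (n : nat) (K : {set {set 'I_n}}) r (F X : {set 'I_n}) :
  closedK K -> F \in faces_card K r.+1 -> bcoef F X != 0%R -> X \in faces_card K r.
Proof.
move=> cK; rewrite !inE => /andP [FK /eqP cF] /bcoef_supp [sXF cD].
rewrite (cK F) //=; move: cD; rewrite cardsD (setIidPr sXF) cF.
have := subset_leq_card sXF; rewrite cF => h.
move=> e; have e1 : (r.+1 - #|X|)%N = S O := e; apply/eqP; have := subnKC h; rewrite e1 addn1 => -[] E; exact: E.
Qed.
Local Open Scope ring_scope.

Lemma Bm_eq (n : nat) (K : {set {set 'I_n}}) r :
  closedK K -> Bm K r = bdry K r *m Csel K r.
Proof.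
move=> cK; apply/matrixP => i k; rewrite !mxE.
under eq_bigr => j _ do rewrite !mxE.
case kf: (enum_val k \in faces_card K r).
  rewrite (bigD1 (enum_rank_in kf (enum_val k))) //= enum_rankK_in // eqxx mulr1.
  rewrite big1 ?addr0 // => j jn.
  case: eqP => [E|]; last by rewrite mulr0.
  by move: jn; rewrite (_ : j = enum_rank_in kf (enum_val k)) ?eqxx //; apply: enum_val_inj; rewrite enum_rankK_in.
rewrite big1.
  apply/eqP; apply: contraFT kf => h; apply: bcoef_face h => //.
  exact: enum_valP.
move=> j _; case: eqP => [E|]; last by rewrite mulr0.
by move: kf; rewrite -E enum_valP.
Qed.

Lemma Csel_free (n : nat) (K : {set {set 'I_n}}) r : row_free (Csel K r).
Proof.
have E : Csel K r *m (Csel K r)^T = 1%:M.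
  apply/matrixP => j j'; rewrite !mxE.
  under eq_bigr => k _ do rewrite !mxE.
  rewrite (bigD1 (enum_rank (enum_val j))) //= enum_rankK eqxx mul1r.
  rewrite big1 ?addr0.
    by rewrite (inj_eq enum_val_inj) eq_sym; case: eqP.
  move=> k kn; case: eqP => [Ek|]; last by rewrite mul0r.
  by move: kn; rewrite Ek enum_valK eqxx.
rewrite /row_free eqn_leq rank_leq_row /=.
by rewrite -{1}(mxrank1 R #|faces_card K r|) -E mxrankM_maxl.
Qed.

Lemma rank_Bm (n : nat) (K : {set {set 'I_n}}) r :
  closedK K -> \rank (Bm K r) = \rank (bdry K r).
Proof. by move=> cK; rewrite Bm_eq // mxrankMfree // Csel_free. Qed.

Lemma rank_add (n : nat) (K L : {set {set 'I_n}}) r (s : {set 'I_n}) :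
  faces_card L r.+1 = s |: faces_card K r.+1 ->
  ~~ (rowv s <= Bm K r)%MS -> \rank (Bm L r) = (\rank (Bm K r)).+1.
Proof.
move=> eL ns.
have sL : s \in faces_card L r.+1 by rewrite eL setU11.
have sub1 : (Bm L r <= Bm K r + rowv s)%MS.
  apply/row_subP => i; rewrite row_Bm.
  have : enum_val i \in s |: faces_card K r.+1 by rewrite -eL enum_valP.
  case/setU1P => [->|h]; first exact: addsmxSr.
  apply: submx_trans (addsmxSl _ _).
  by rewrite -(enum_rankK_in h h) -row_Bm row_sub.
have sub2 : (Bm K r + rowv s <= Bm L r)%MS.
  rewrite addsmx_sub; apply/andP; split.
    apply/row_subP => i; rewrite row_Bm.
    have h : enum_val i \in faces_card L r.+1 by rewrite eL setU1r // enum_valP.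
    by rewrite -(enum_rankK_in h h) -row_Bm row_sub.
  by rewrite -(enum_rankK_in sL sL) -row_Bm row_sub.
have -> : \rank (Bm L r) = \rank (Bm K r + rowv s)%MS.
  by apply/eqP; rewrite eqn_leq !mxrankS.
apply/eqP; rewrite eqn_leq; apply/andP; split.
  apply: leq_trans (mxrank_adds_leqif _ _).1 _.
  apply: leq_trans (leq_add (leqnn _) (rank_leq_row (rowv s))) _.
  by rewrite addn1.
rewrite (ltn_leqif (mxrank_leqif_sup (addsmxSl _ _))).
by apply: contra ns => h; exact: submx_trans (addsmxSr _ _) h.
Qed.

Lemma notsub (n : nat) (K : {set {set 'I_n}}) r (s : {set 'I_n}) (phi : {set 'I_n} -> R) :
  (forall rho, rho \in faces_card K r.+1 -> \sum_(X : {set 'I_n}) bcoef rho X * phi X = 0) ->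
  \sum_(X : {set 'I_n}) bcoef s X * phi X != 0 ->
  ~~ (rowv s <= Bm K r)%MS.
Proof.
move=> H0 H1; apply/negP => /submxP [D E].
have Z : Bm K r *m colv phi = 0.
  apply/matrixP => i j; rewrite ord1 [RHS]mxE.
  have -> : (Bm K r *m colv phi) i 0 = (rowv (enum_val i) *m colv phi) 0 0.
    by rewrite !mxE; apply: eq_bigr => k _; rewrite !mxE.
  by rewrite rowv_colv H0 // enum_valP.
move: H1; rewrite -rowv_colv E -mulmxA Z mulmx0 mxE eqxx.
done.
Qed.

Lemma rank0 (n : nat) (K : {set {set 'I_n}}) r :
  faces_card K r.+2 = set0 -> \rank (bdry K r.+1) = 0%N.
Proof.
move=> e; apply/eqP; rewrite -leqn0; apply: leq_trans (rank_leq_row _) _.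
by rewrite e cards0.
Qed.

Lemma betti_eq (n : nat) (K L : {set {set 'I_n}}) r (s : {set 'I_n}) :
  closedK K -> closedK L ->
  faces_card L r.+1 = s |: faces_card K r.+1 -> s \notin faces_card K r.+1 ->
  faces_card K r.+2 = set0 -> faces_card L r.+2 = set0 ->
  ~~ (rowv s <= Bm K r)%MS -> betti L r = betti K r.
Proof.
move=> cK cL eL sK eK2 eL2 ns.
rewrite /betti (rank0 eK2) (rank0 eL2) !subn0 -!rank_Bm // (rank_add eL ns).
by rewrite eL cardsU1 sK add1n subSS.
Qed.

Local Close Scope ring_scope.

Lemma facet_of_max (n : nat) (K : {set {set 'I_n}}) r F :
  (forall G, G \in K -> #|G| <= r.+1) -> F \in K -> #|F| = r.+1 -> F \in facets K.
Proof.
move=> dK FK cF; rewrite inE FK /=; apply/forall_inP => G GK; apply/implyP => sFG.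
by rewrite eq_sym eqEcard sFG cF dK.
Qed.

Lemma facets_eq (n : nat) (K : {set {set 'I_n}}) r :
  pure_of_dim K r -> facets K = faces_card K r.+1.
Proof.
move=> [[_ dK] pK]; apply/setP => F; rewrite [F \in faces_card _ _]inE.
apply/idP/idP => [h|/andP [FK /eqP cF]]; last by apply: (facet_of_max dK FK cF).
have := h; rewrite inE => /andP [FK _]; by rewrite FK (pK _ h) eqxx.
Qed.

Lemma natA a b r m : b <= r.+1 -> a < b -> r.+1 - a <= m.+1 -> r.+1 - b <= m.
Proof. lia. Qed.

Lemma ext_pure (n : nat) (K : {set {set 'I_n}}) r :
  pure_of_dim K r -> forall F, F \in K -> exists2 G, G \in K & F \subset G /\ #|G| = r.+1.
Proof.
move=> [[_ dK] pK].
suff H : forall m (F : {set 'I_n}), r.+1 - #|F| <= m -> F \in K ->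
    exists2 G, G \in K & F \subset G /\ #|G| = r.+1.
  by move=> F; apply: (H (r.+1 - #|F|)).
elim=> [|m IH] F hm FK.
  exists F => //; split => //; apply/eqP; rewrite eqn_leq dK //= -subn_eq0 -leqn0; apply: hm.
case fF: (F \in facets K).
  by exists F; [|split; [|rewrite (pK _ fF)]].
move: fF; rewrite inE FK /= => /negbT /forall_inPn [G GK].
rewrite negb_imply => /andP [sFG nGF].
have pFG : F \proper G by rewrite properEneq eq_sym nGF sFG.
have := proper_card pFG; have := dK _ GK => h1 h2.
have [G' G'K [sGG' cG']] := IH G (natA h1 h2 hm) GK.
by exists G' => //; split => //; apply: subset_trans sGG'.
Qed.

Lemma faces_big0 (n : nat) (X : {set {set 'I_n}}) r :
  (forall G, G \in X -> #|G| <= r.+1) -> faces_card X r.+2 = set0.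
Proof.
move=> dX; apply/setP => G; rewrite !inE; apply/negbTE/negP => /andP [GX /eqP cG].
by have := dX _ GX; rewrite cG ltnn.
Qed.

Lemma grow (n r beta : nat) (K L : {set {set 'I_n}}) (s : {set 'I_n}) :
  Kclass r beta K ->
  (forall L : {set {set 'I_n}}, Kclass r beta L -> #|facets L| <= #|facets K|) ->
  closedK L -> (forall v, [set v] \in L) ->
  (forall G, G \in L -> #|G| <= r.+1) ->
  (forall F, F \in L -> exists2 G, G \in L & F \subset G /\ #|G| = r.+1) ->
  faces_card L r.+1 = s |: faces_card K r.+1 -> s \notin faces_card K r.+1 ->
  ~~ (rowv s <= Bm K r)%MS -> False.
Proof.
move=> [[cK sK] [pK bK]] mx cL sL dL fL eL sn ns.
have sF : s \in faces_card L r.+1 by rewrite eL setU11.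
have pL : pure_of_dim L r.
  split; first split => //.
    by exists s; move: sF; rewrite inE => /andP [? /eqP].
  move=> F; rewrite inE => /andP [FL /forall_inP fm].
  have [G GL [sFG cG]] := fL F FL.
  by have := fm G GL; rewrite sFG /= => /eqP <-.
have bL : betti L r = beta.
  rewrite (betti_eq cK cL eL sn _ (faces_big0 dL) ns) //.
  apply: faces_big0; exact: pK.1.2.
have := mx L (conj (conj cL sL) (conj pL bL)).
by rewrite (facets_eq pL) (facets_eq pK) eL cardsU1 sn ltnn.
Qed.

Local Open Scope ring_scope.
Lemma sum_ind (n : nat) (rho S : {set 'I_n}) :
  (\sum_(X : {set 'I_n}) bcoef rho X * (X == S)%:R = bcoef rho S)%R.
Proof.
rewrite (bigD1 S) //= eqxx GRing.mulr1 big1 ?GRing.addr0 // => X /negbTE ->.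
by rewrite GRing.mulr0.
Qed.
Local Close Scope ring_scope.

Lemma natB a b c d : a + b = c -> d <= c -> a.+1 = d -> 0 < b.
Proof. lia. Qed.

Lemma part1 (n r beta : nat) (K : {set {set 'I_n}}) :
  Kclass r beta K ->
  (forall L : {set {set 'I_n}}, Kclass r beta L -> #|facets L| <= #|facets K|) ->
  forall S : {set 'I_n}, #|S| = r -> S \in K.
Proof.
move=> kc mx S cS; apply/negPn/negP => nS.
have [[cK sK] [pK bK]] := kc.
have [[F0 F0K cF0] dK] := pK.1.
have : 0 < #|~: S|.
  by apply: (natB (cardsC S) (max_card (mem F0))); rewrite cS cF0.
rewrite card_gt0 => /set0Pn [v]; rewrite inE => vS.
set s := v |: S.
have cs : #|s| = r.+1 by rewrite cardsU1 vS cS.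
have sSs : S \subset s by apply: subsetUr.
have snK : s \notin K by apply: contra nS => h; exact: cK h sSs.
apply: (@grow n r beta K (K :|: powerset s) s kc mx).
- move=> F G; rewrite !inE ?powersetE => /orP [FK|Fs] sGF.
    by rewrite (cK F G FK sGF).
  by rewrite (subset_trans sGF Fs) orbT.
- by move=> v'; rewrite inE sK.
- move=> G; rewrite !inE ?powersetE => /orP [GK|Gs]; first exact: dK.
  by rewrite -cs subset_leq_card.
- move=> F; rewrite !inE ?powersetE => /orP [FK|Fs].
    have [G GK [sFG cG]] := ext_pure pK FK.
    by exists G => //; rewrite inE GK.
  by exists s; rewrite ?inE ?powersetE ?subxx ?orbT.
- apply/setP => X; rewrite !inE ?powersetE.
  case: (eqVneq X s) => [->|nX] /=; first by rewrite subxx orbT cs eqxx.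
  case XK: (X \in K) => //=; apply/negbTE/negP => /andP [sX /eqP cX].
  by move: nX; rewrite eqEcard sX cX cs leqnn.
- by rewrite inE (negbTE snK).
apply: (@notsub n K r s (fun X => GRing.natmul (GRing.one R) (X == S))).
  move=> rho; rewrite inE => /andP [rK _]; rewrite sum_ind.
  apply/eqP; apply: contraNT nS => /bcoef_supp [h _]; exact: cK rK h.
rewrite sum_ind; apply: bcoef_nz => //.
have -> : s :\: S = [set v].
  apply/setP => x; rewrite !inE; case: (eqVneq x v) => [->|_] /=; first by rewrite vS.

  by case: (x \in S).
exact: cards1.
Qed.

Lemma card_del (n : nat) (A : {set 'I_n}) x : x \in A -> #|A :\ x| = (#|A|).-1.
Proof. by move=> xA; rewrite (cardsD1 x A) xA. Qed.

Lemma up_del (n r : nat) (K : {set {set 'I_n}}) (rho : {set 'I_n}) a b :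
  closedK K -> 0 < r -> rho \in K -> #|rho| = r.+1 -> a \in rho -> b \in rho -> a != b ->
  up_neighbors K r.-1 (rho :\ a) (rho :\ b).
Proof.
move=> cK r0 rK cr ar br ab.
have U : (rho :\ a) :|: (rho :\ b) = rho.
  apply/setP => x; rewrite !inE; case: (eqVneq x a) => [->|]/=; first by rewrite ab ar.
  by move=> _; case: (x \in rho); rewrite ?andbF ?orbF ?orbT.
rewrite /up_neighbors U rK (cK _ _ rK (subsetDl _ _)) (cK _ _ rK (subsetDl _ _)) /=.
rewrite !card_del // cr /= (prednK r0) !eqxx /= ?andbT.
apply/negP => /eqP E; have : b \in rho :\ a by rewrite !inE eq_sym ab br.
by rewrite E !inE eqxx.
Qed.

Lemma up_sym (n r : nat) (K : {set {set 'I_n}}) X Y :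
  up_neighbors K r X Y -> up_neighbors K r Y X.
Proof.
by rewrite /up_neighbors => /and5P [a b c d /and3P [e f g]]; rewrite setUC a b c d eq_sym e f g.
Qed.

Lemma conn_eq (n r : nat) (K : {set {set 'I_n}}) F X Y :
  up_neighbors K r X Y -> connect (up_neighbors K r) F X = connect (up_neighbors K r) F Y.
Proof.
move=> h; apply/idP/idP => c; apply: connect_trans c _; apply: connect1 => //.
exact: up_sym.
Qed.

Lemma key2 (n r beta : nat) (K : {set {set 'I_n}}) :
  0 < r -> Kclass r beta K ->
  (forall L : {set {set 'I_n}}, Kclass r beta L -> #|facets L| <= #|facets K|) ->
  forall (s : {set 'I_n}) a b, #|s| = r.+1 -> a \in s -> b \in s -> a != b ->
  connect (up_neighbors K r.-1) (s :\ b) (s :\ a).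
Proof.
move=> r0 kc mx s a b cs as_ bs ab.
have allK := part1 kc mx.
have [[cK sK] [pK bK]] := kc.
have dK := pK.1.2.
case sKb: (s \in K).
  by apply: connect1; apply: up_del => //; rewrite eq_sym.
apply/negPn/negP => nc.
set e := up_neighbors K r.-1.
set D := (s :\ a) :&: (s :\ b).
have Ds : D \subset s by apply: subset_trans (subsetIl _ _) (subsetDl _ _).
have eD : s :\: D = [set a; b].
  apply/setP => x; rewrite !inE.
  case: (eqVneq x a) => [->|xa] /=; first by rewrite as_.
  case: (eqVneq x b) => [->|xb] /=; first by rewrite bs andbF.
  by case: (x \in s).
have cD : #|D| = r.-1.
  have := cardsD s D; rewrite (setIidPr Ds) eD cards2 ab cs /=.
  have := subset_leq_card Ds; rewrite cs; lia.
have sfull : forall G : {set 'I_n}, G \subset s -> G != s -> G \in K.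
  move=> G sG nG.
  have : ~~ (s \subset G) by apply: contra nG => h; rewrite eqEsubset sG h.
  case/subsetPn => x xs xG.
  apply: (cK (s :\ x)); first by apply: allK; rewrite card_del // cs.
  apply/subsetP => y yG; rewrite !inE (subsetP sG) // andbT.
  by apply: contraNneq xG => <-.
apply: (@grow n r beta K (s |: K) s kc mx).
- move=> F G; rewrite !inE => /orP [/eqP ->|FK] sGF.
    by case: (eqVneq G s) => [->|nG]; rewrite ?eqxx // sfull ?orbT.
  by rewrite (cK F G FK sGF) orbT.
- by move=> v'; rewrite inE sK orbT.
- move=> G; rewrite !inE => /orP [/eqP ->|GK]; first by rewrite cs.
  exact: dK.
- move=> F; rewrite !inE => /orP [/eqP ->|FK].
    by exists s; rewrite ?inE ?eqxx.
  have [G GK [sFG cG]] := ext_pure pK FK.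
  by exists G => //; rewrite inE GK orbT.
- apply/setP => X; rewrite !inE.
  case: (eqVneq X s) => [->|nX] //=; by rewrite cs eqxx.
- by rewrite inE sKb.
apply: (@notsub n K r s (fun X => GRing.mul (GRing.natmul (GRing.one R) (connect e (s :\ b) X)) (bcoef X D))).
  move=> rho; rewrite inE => /andP [rK /eqP cr].
  case Dr: (D \subset rho); last by apply: sum_notsub; rewrite Dr.
  have : #|rho :\: D| == 2.
    have := cardsD rho D; rewrite (setIidPr Dr) cr cD => ->.
    apply/eqP; lia.
  case/cards2P => a' [b' [ab' e']].
  rewrite (sum2 _ Dr e' ab').
  have ar : a' \in rho.
    have : a' \in rho :\: D by rewrite e' !inE eqxx.
    by case/setDP.
  have br : b' \in rho.
    have : b' \in rho :\: D by rewrite e' !inE eqxx orbT.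
    by case/setDP.
  rewrite (conn_eq (s :\ b) (up_del cK r0 rK cr ar br ab')).
  rewrite GRing.mulrCA [X in GRing.add _ X]GRing.mulrCA -GRing.mulrDr.
  by rewrite (sign_cancel Dr e' ab') GRing.mulr0.
rewrite (sum2 _ Ds eD ab) (negbTE nc) connect0 GRing.mul0r GRing.mulr0 GRing.add0r.
rewrite GRing.mul1r; apply: GRing.mulf_neq0; apply: bcoef_nz.
- exact: subsetDl.
- have -> : s :\: (s :\ b) = [set b].
    apply/setP => x; rewrite !inE; case: (eqVneq x b) => [->|] //=.
    by move=> _; case: (x \in s).
  exact: cards1.
- exact: subsetIr.
- have -> : (s :\ b) :\: D = [set a].
    apply/setP => x; rewrite !inE.
    case: (eqVneq x a) => [->|xa] /=; first by rewrite ab as_.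
    by case: (x \in s); case: (x != b).
  exact: cards1.
Qed.

Lemma natC a b c : a = b -> c = b.+1 -> 0 < c -> a = c.-1.
Proof. lia. Qed.

Lemma conn_all (n r : nat) (K : {set {set 'I_n}}) :
  0 < r ->
  (forall (s : {set 'I_n}) a b, #|s| = r.+1 -> a \in s -> b \in s -> a != b ->
     connect (up_neighbors K r.-1) (s :\ b) (s :\ a)) ->
  forall m (F G : {set 'I_n}), #|F| = r -> #|G| = r -> #|F :\: G| = m ->
  connect (up_neighbors K r.-1) F G.
Proof.
move=> r0 H; elim=> [|m IH] F G cF cG cm.
  have : F :\: G == set0 by rewrite -cards_eq0 cm.
  rewrite setD_eq0 => sFG.
  have -> : F = G by apply/eqP; rewrite eqEcard sFG cF cG leqnn.
  exact: connect0.
have : F :\: G != set0 by rewrite -card_gt0 cm.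
case/set0Pn => x; rewrite inE => /andP [xG xF].
have : G :\: F != set0.
  rewrite -card_gt0; have := cardsD G F; have := cardsD F G.
  rewrite setIC cF cG cm => <- ->; lia.
case/set0Pn => y; rewrite inE => /andP [yF yG].
set F1 := y |: (F :\ x).
have yF1 : y \notin F :\ x by rewrite inE negb_and yF orbT.
have cF1 : #|F1| = r by rewrite cardsU1 yF1 card_del // cF add1n prednK.
have eF1 : F1 :\: G = (F :\: G) :\ x.
  apply/setP => z; rewrite !inE.
  case: (eqVneq z y) => [->|zy]; first by rewrite yG /= andbF.
  by rewrite /=; case: (z \in G); case: (z \in F); case: (z != x).
have cm1 : #|F1 :\: G| = m.
  by rewrite eF1 card_del ?cm // inE xG xF.
apply: connect_trans (IH F1 G cF1 cG cm1).
set s := y |: F.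
have cs : #|s| = r.+1 by rewrite cardsU1 yF cF.
have xy : x != y by apply: contraNneq yF => <-.
have e1 : s :\ y = F.
  apply/setP => z; rewrite !inE; case: (eqVneq z y) => [->|] /=; first by rewrite (negbTE yF).
  by [].
have e2 : s :\ x = F1.
  apply/setP => z; rewrite !inE; case: (eqVneq z y) => [->|] /=; first by rewrite eq_sym xy.
  by move=> _; case: (z != x).
rewrite -e1 -e2; apply: H => //; rewrite !inE ?eqxx ?xF ?orbT //.
Qed.

Theorem mainTheorem3 (n r beta : nat) (K : {set {set 'I_n}}) :
  (1 <= r)%N ->
  Kclass r beta K ->
  (forall L : {set {set 'I_n}}, Kclass r beta L -> #|facets L| <= #|facets K|)%N ->
  (forall S : {set 'I_n}, #|S| = r -> S \in K) /\ path_connected K r.-1.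
Proof.
move=> r0 kc mx; split; first exact: part1 kc mx.
move=> F G FK GK cF cG.
rewrite (prednK r0) in cF cG.
have := @conn_all n r K r0 (key2 r0 kc mx) #|F :\: G| F G cF cG (erefl _).
by case/connectP => p pp lp; exists p; split.
Qed.
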